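(* Let the problem data, partition, residuals, augmented Lagrangian and primal updates be as described in the context. Let initial values $X^0_i\in[-u,u]$, $Z^0\in[-u,u]$, $Y^{c,0}_i\in[0,u^c_{Y_i}]$, $\mu^{c,0}_i\in[0,u^c_{\mu_i}]$ be given, and generate the primal sequences by (U1)–(U3) and the dual sequences by the descent rule (D). Then for every $K\in\mathbb N$, $$ L^0\ge L^K+\sum_{i=1}^N\sum_{k=1}^K\sum_{c\in\mathcal C}\sum_j \alpha^{c,k}_{i,j}\,\big|(r^{c,k}_i)_j\big|^2+\sum_{k=0}^{K-1}P^k+\sum_{i=1}^N\sum_{k=0}^{K-1}\sum_{l=1}^M\Big({}^{1}\sigma^k_{i,l}\|X^k_{i,l}-X^{k+1}_{i,l}\|_1+U^k_{i,l}\Big), $$ where $r^{c,k}_i:=r^c_i(X^k_i,Z^k,Y^{c,k}_i)$, $L^k:=\sum_i L_i(X^k_i,Z^k,(Y^{c,k}_i)_c,(\mu^{c,k}_i)_c)$, $$ P^k:=\sum_{i=1}^N\Big[\sum_{l}{}^{2}\sigma^k_{i,l}\|X^{k+1}_{i,l}-X^k_{i,l}\|^2+\rho_i\|X^{k+1}_i-X^k_i\|^2+(\tau^k+\rho_i)\|Z^{k+1}-Z^k\|^2+\sum_{c\in\mathcal C}\Big(\gamma^{c,k}_i+\tfrac{\rho_i}{2}\Big)\|Y^{c,k+1}_i-Y^{c,k}_i\|^2 $$ $$ \qquad+\tfrac{\rho_i}{2}\sum_{l}\Big(\|F_i(X^{k+1,k+1}_{i,l})-F_i(X^{k+1,k}_{i,l})\|^2+\|G_{i,l}(X^{k+1}_{i,l}-X^k_{i,l})\|^2+2\|H_{i,l}(X^{k+1}_{i,l}-X^k_{i,l})\|^2\Big)\Big],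 $$ and $$ U^k_{i,l}:=\Big\langle \mu^{F,k}_i+\rho_i\big(F_i(X^{k+1,k+1}_{i,l})+Y^{F,k}_i\big),\ F_i(X^{k+1,k}_{i,l})-F_i(X^{k+1,k+1}_{i,l})-\big(\nabla_{X_{i,l}}F_i(X^{k+1,k+1}_{i,l})\big)^{\!T}\!\!\cdot(X^k_{i,l}-X^{k+1}_{i,l})\Big\rangle, $$ the last product denoting the vector whose $j$-th entry is $(X^k_{i,l}-X^{k+1}_{i,l})^T\nabla_{X_{i,l}}(F_i)_j(X^{k+1,k+1}_{i,l})$.
   Context: Problem data. $n,N,M\in\mathbb N$. $u\in\mathbb R^n$ with $u>0$. $f(Z)=\langle f_0,Z\rangle$ is linear on $\mathbb R^n$. For each $i=1,\dots,N$: $F_i:\mathbb R^n\to\mathbb R^{p_i}$ has convex quadratic components (each component of the form $a(Z)+c(Z)^2$ or $c(Z)^2-a(Z)b(Z)$ with $a,b,c$ affine, convex on $[-u,u]$); $G_i:\mathbb R^n\to\mathbb R^{q_i}$ and $H_i:\mathbb R^n\to\mathbb R^{s_i}$ are affine. Vectors in $\mathbb R^n$ are partitioned into $M$ disjoint subvectors $Z=(Z_1,\dots,Z_M)$, $Z_l\in\mathbb R^{m_l}$, $\sum_l m_l=n$, the same partition for every $X_i\in\mathbb R^n$; correspondingly $u=(u_1,\dots,u_M)$, $f(Z)=\sum_l\langle f_l,Z_l\rangle$, $G_i(Z)=\sum_l G_{i,l}Z_l+G_{i,0}$, $H_i(Z)=\sum_l H_{i,l}Z_l+H_{i,0}$ with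 matrices $G_{i,l},H_{i,l}$. Slack variables and residuals. Let $\mathcal C=\{pX,nX,F,G,pH,nH\}$. For each $i$ there are slack vectors $Y^{pX}_i,Y^{nX}_i\in\mathbb R^n$, $Y^F_i\in\mathbb R^{p_i}$, $Y^G_i\in\mathbb R^{q_i}$, $Y^{pH}_i,Y^{nH}_i\in\mathbb R^{s_i}$, with given positive upper bound vectors $u^c_{Y_i}$ (slack boxes $[0,u^c_{Y_i}]$), and dual vectors $\mu^c_i$ of the same sizes. Residuals: $r^{pX}_i=X_i-Z+Y^{pX}_i$, $r^{nX}_i=Z-X_i+Y^{nX}_i$, $r^F_i=F_i(X_i)+Y^F_i$, $r^G_i=G_i(X_i)+Y^G_i$, $r^{pH}_i=H_i(X_i)+Y^{pH}_i$, $r^{nH}_i=-H_i(X_i)+Y^{nH}_i$. With $\rho_i>0$, the augmented Lagrangian of block $i$ is $$L_i=f(X_i)+\sum_{c\in\mathcal C}\langle\mu^c_i,r^c_i\rangle+\frac{\rho_i}{2}\sum_{c\in\mathcal C}\|r^c_i\|^2.$$ Gauss–Seidel notation: $X^{k+1,k}_{i,l}:=(X^{k+1}_{i,1},\dots,X^{k+1}_{i,l-1},X^k_{i,l},X^k_{i,l+1},\dots,X^k_{i,M})$ and $X^{k+1,k+1}_{i,l}:=(X^{k+1}_{i,1},\dots,X^{k+1}_{i,l},X^k_{i,l+1},\dots,X^k_{i,M})$. Parameters: ${}^{1}\sigma^k_{i,l}\ge0$, ${}^{2}\sigma^k_{i,l}>0$, $\tau^k>0$, $\gamma^{c,k}_i>0$.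 Updates at iteration $k$ (for each $i$): (U1) For $l=1,\dots,M$ in order, $X^{k+1}_{i,l}$ is the minimizer over $X_{i,l}\in[-u_l,u_l]$ of $L_i\big((X^{k+1}_{i,1},\dots,X^{k+1}_{i,l-1},X_{i,l},X^k_{i,l+1},\dots,X^k_{i,M}),Z^k,(Y^{c,k}_i)_c,(\mu^{c,k}_i)_c\big)+{}^{1}\sigma^k_{i,l}\|X_{i,l}-X^k_{i,l}\|_1+\tfrac{{}^{2}\sigma^k_{i,l}}{2}\|X_{i,l}-X^k_{i,l}\|^2$. (U2) $Z^{k+1}$ is the minimizer over $Z\in[-u,u]$ of $\sum_{i=1}^N\Big(\langle\mu^{pX,k}_i,X^{k+1}_i-Z+Y^{pX,k}_i\rangle+\langle\mu^{nX,k}_i,Z-X^{k+1}_i+Y^{nX,k}_i\rangle+\tfrac{\rho_i}{2}\big(\|X^{k+1}_i-Z+Y^{pX,k}_i\|^2+\|Z-X^{k+1}_i+Y^{nX,k}_i\|^2\big)+\tfrac{\tau^k}{2}\|Z-Z^k\|^2\Big)$. (U3) For each $c\in\mathcal C$, $Y^{c,k+1}_i$ is the minimizer over $Y\in[0,u^c_{Y_i}]$ of $\langle\mu^{c,k}_i,r^c_i(X^{k+1}_i,Z^{k+1},Y)\rangle+\tfrac{\rho_i}{2}\|r^c_i(X^{k+1}_i,Z^{k+1},Y)\|^2+\tfrac{\gamma^{c,k}_i}{2}\|Y-Y^{c,k}_i\|^2$, where $r^c_i(X_i,Z,Y)$ denotes the residual $r^c_i$ with $Y^c_i=Y$. Dual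 descent rule (D): given positive scalars $\alpha^c_i$ and positive dual upper-bound vectors $u^c_{\mu_i}$, set, with $r^{c,k+1}_i:=r^c_i(X^{k+1}_i,Z^{k+1},Y^{c,k+1}_i)$, $\mu^{c,k+1}_i:=\mu^{c,k}_i-\alpha^{c,k+1}_i\,r^{c,k+1}_i$, where $\alpha^{c,k+1}_i$ is the diagonal matrix with entries $\alpha^{c,k+1}_{i,j}=\alpha^c_i$ if $\mu^{c,k}_{i,j}-\alpha^c_i(r^{c,k+1}_i)_j\in[0,(u^c_{\mu_i})_j]$ and $\alpha^{c,k+1}_{i,j}=0$ otherwise. *)

(* Defs.v *)
From HB Require Import structures.
From mathcomp Require Import all_boot all_order all_algebra.
Import Order.TTheory GRing.Theory Num.Theory.
Local Open Scope ring_scope.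

Section Vec.
Variable R : realFieldType.

Definition dot {m : nat} (u v : 'I_m -> R) : R := \sum_(j < m) u j * v j.
Definition sqn {m : nat} (u : 'I_m -> R) : R := \sum_(j < m) u j ^+ 2.
Definition vsub {m : nat} (u v : 'I_m -> R) : 'I_m -> R := fun j => u j - v j.

Record affine (n : nat) := Affine { aff_w : 'I_n -> R ; aff_c : R }.
Arguments aff_w {n}.
Arguments aff_c {n}.
Definition aff_eval {n : nat} (a : affine n) (x : 'I_n -> R) : R :=
  dot (aff_w a) x + aff_c a.

Inductive qcomp (n : nat) :=
  | QSum of affine n & affine n
  | QDiff of affine n & affine n & affine n.

Definition qeval {n : nat} (q : qcomp n) (x : 'I_n -> R) : R :=
  match q with
  | QSum a c => aff_eval a x + (aff_eval c x) ^+ 2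
  | QDiff c a b => (aff_eval c x) ^+ 2 - aff_eval a x * aff_eval b x
  end.

Definition qgrad {n : nat} (q : qcomp n) (x : 'I_n -> R) : 'I_n -> R :=
  fun d => match q with
  | QSum a c => aff_w a d + 2 * aff_eval c x * aff_w c d
  | QDiff c a b => 2 * aff_eval c x * aff_w c d
                   - (aff_w a d * aff_eval b x + aff_eval a x * aff_w b d)
  end.
End Vec.
Arguments dot {R m}.
Arguments sqn {R m}.
Arguments vsub {R m}.
Arguments aff_w {R n}.
Arguments aff_c {R n}.
Arguments aff_eval {R n}.
Arguments qeval {R n}.
Arguments qgrad {R n}.
Arguments QSum {R n}.
Arguments QDiff {R n}.

Inductive ctype := cpX | cnX | cF | cG | cpH | cnH.
Definition call : seq ctype := [:: cpX; cnX; cF; cG; cpH; cnH].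

Definition dimc0 (n N : nat) (p q s : 'I_N -> nat) (i : 'I_N) (c : ctype) : nat :=
  match c with
  | cpX | cnX => n
  | cF => p i
  | cG => q i
  | cpH | cnH => s i
  end.

Record problem (R : realFieldType) := Problem {
  pn : nat;
  pN : nat;
  pM : nat;
  blk : 'I_pn -> 'I_pM;           (* coordinate j belongs to subvector blk j *)
  ub : 'I_pn -> R;
  f0 : 'I_pn -> R;                (* f(Z) = <f0, Z> *)
  pp : 'I_pN -> nat;
  pq : 'I_pN -> nat;
  ps : 'I_pN -> nat;
  Fc : forall i : 'I_pN, 'I_(pp i) -> qcomp R pn;
  Gm : forall i : 'I_pN, 'I_(pq i) -> 'I_pn -> R;
  G0 : forall i : 'I_pN, 'I_(pq i) -> R;
  Hm : forall i : 'I_pN, 'I_(ps i) -> 'I_pn -> R;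
  H0 : forall i : 'I_pN, 'I_(ps i) -> R;
  rho : 'I_pN -> R;
  uY : forall (i : 'I_pN) (c : ctype), 'I_(dimc0 pn pN pp pq ps i c) -> R;
  umu : forall (i : 'I_pN) (c : ctype), 'I_(dimc0 pn pN pp pq ps i c) -> R;
  alpha : 'I_pN -> ctype -> R
}.

Arguments pn {R}.
Arguments pN {R}.
Arguments pM {R}.
Arguments blk {R}.
Arguments ub {R}.
Arguments f0 {R}.
Arguments pp {R}.
Arguments pq {R}.
Arguments ps {R}.
Arguments Fc {R}.
Arguments Gm {R}.
Arguments G0 {R}.
Arguments Hm {R}.
Arguments H0 {R}.
Arguments rho {R}.
Arguments uY {R}.
Arguments umu {R}.
Arguments alpha {R}.

Section Algo.
Variable R : realFieldType.
Variable P : problem R.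
Local Notation n := (pn P).
Local Notation N := (pN P).
Local Notation M := (pM P).

Definition dimc (i : 'I_N) (c : ctype) : nat := dimc0 n N (pp P) (pq P) (ps P) i c.
Definition Yfam (i : 'I_N) := forall c : ctype, 'I_(dimc i c) -> R.

Definition inbox (x : 'I_n -> R) : Prop := forall j, - ub P j <= x j <= ub P j.
Definition inboxl (l : 'I_M) (x : 'I_n -> R) : Prop :=
  forall j, blk P j = l -> - ub P j <= x j <= ub P j.
Definition inYbox (i : 'I_N) (c : ctype) (y : 'I_(dimc i c) -> R) : Prop :=
  forall j, 0 <= y j <= uY P i c j.
Definition inMubox (i : 'I_N) (c : ctype) (y : 'I_(dimc i c) -> R) : Prop :=
  forall j, 0 <= y j <= umu P i c j.

Definition Fval (i : 'I_N) (x : 'I_n -> R) : 'I_(pp P i) -> R :=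
  fun j => qeval (Fc P i j) x.
Definition Glin (i : 'I_N) (x : 'I_n -> R) : 'I_(pq P i) -> R :=
  fun j => \sum_(d < n) Gm P i j d * x d.
Definition Hlin (i : 'I_N) (x : 'I_n -> R) : 'I_(ps P i) -> R :=
  fun j => \sum_(d < n) Hm P i j d * x d.
Definition Gval (i : 'I_N) (x : 'I_n -> R) : 'I_(pq P i) -> R :=
  fun j => Glin i x j + G0 P i j.
Definition Hval (i : 'I_N) (x : 'I_n -> R) : 'I_(ps P i) -> R :=
  fun j => Hlin i x j + H0 P i j.

Definition resb (i : 'I_N) (c : ctype) (X Z : 'I_n -> R) : 'I_(dimc i c) -> R :=
  match c as c0 return 'I_(dimc i c0) -> R with
  | cpX => fun j => X j - Z j
  | cnX => fun j => Z j - X j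
  | cF => Fval i X
  | cG => Gval i X
  | cpH => Hval i X
  | cnH => fun j => - Hval i X j
  end.
Definition res (i : 'I_N) (c : ctype) (X Z : 'I_n -> R) (y : 'I_(dimc i c) -> R)
  : 'I_(dimc i c) -> R := fun j => resb i c X Z j + y j.

Definition Li (i : 'I_N) (X Z : 'I_n -> R) (Y mu : Yfam i) : R :=
  dot (f0 P) X
  + \sum_(c <- call) dot (mu c) (res i c X Z (Y c))
  + rho P i / 2 * \sum_(c <- call) sqn (res i c X Z (Y c)).

Definition rstr (l : 'I_M) (x : 'I_n -> R) : 'I_n -> R :=
  fun j => if blk P j == l then x j else 0.
Definition bupd (V : 'I_n -> R) (l : 'I_M) (W : 'I_n -> R) : 'I_n -> R :=
  fun j => if blk P j == l then W j else V j.
(* X^{k+1,k}_{i,l} : blocks < l from X1, blocks >= l from X0 *)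
Definition gs_lt (X1 X0 : 'I_n -> R) (l : 'I_M) : 'I_n -> R :=
  fun j => if (blk P j < l)%N then X1 j else X0 j.
(* X^{k+1,k+1}_{i,l} : blocks <= l from X1, blocks > l from X0 *)
Definition gs_le (X1 X0 : 'I_n -> R) (l : 'I_M) : 'I_n -> R :=
  fun j => if (blk P j <= l)%N then X1 j else X0 j.
Definition norm1l (l : 'I_M) (x : 'I_n -> R) : R :=
  \sum_(j < n | blk P j == l) `|x j|.
Definition sqnl (l : 'I_M) (x : 'I_n -> R) : R :=
  \sum_(j < n | blk P j == l) x j ^+ 2.

Variables (X : nat -> 'I_N -> 'I_n -> R) (Z : nat -> 'I_n -> R)
          (Y : nat -> forall i : 'I_N, Yfam i) (mu : nat -> forall i : 'I_N, Yfam i).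
Variables (sigma1 sigma2 : nat -> 'I_N -> 'I_M -> R) (tau : nat -> R)
          (gamma : nat -> 'I_N -> ctype -> R).

(* objective of (U1) at a full vector W *)
Definition objX (k : nat) (i : 'I_N) (l : 'I_M) (W : 'I_n -> R) : R :=
  Li i W (Z k) (Y k i) (mu k i)
  + sigma1 k i l * norm1l l (vsub W (X k i))
  + sigma2 k i l / 2 * sqnl l (vsub W (X k i)).

Definition objZ (k : nat) (W : 'I_n -> R) : R :=
  \sum_(i < N)
    ( dot (mu k i cpX) (res i cpX (X k.+1 i) W (Y k i cpX))
    + dot (mu k i cnX) (res i cnX (X k.+1 i) W (Y k i cnX))
    + rho P i / 2 * (sqn (res i cpX (X k.+1 i) W (Y k i cpX))
                     + sqn (res i cnX (X k.+1 i) W (Y k i cnX)))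
    + tau k / 2 * sqn (vsub W (Z k)) ).

Definition objY (k : nat) (i : 'I_N) (c : ctype) (y : 'I_(dimc i c) -> R) : R :=
  dot (mu k i c) (res i c (X k.+1 i) (Z k.+1) y)
  + rho P i / 2 * sqn (res i c (X k.+1 i) (Z k.+1) y)
  + gamma k i c / 2 * sqn (vsub y (Y k i c)).

Definition rk (k : nat) (i : 'I_N) (c : ctype) : 'I_(dimc i c) -> R :=
  res i c (X k i) (Z k) (Y k i c).

(* alpha^{c,k}_{i,j} for k >= 1 (rule (D), uses mu^{k-1} and r^{c,k}) *)
Definition alph (k : nat) (i : 'I_N) (c : ctype) (j : 'I_(dimc i c)) : R :=
  let v := mu k.-1 i c j - alpha P i c * rk k i c j in
  if (0 <= v) && (v <= umu P i c j) then alpha P i c else 0.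

Definition Lk (k : nat) : R := \sum_(i < N) Li i (X k i) (Z k) (Y k i) (mu k i).

Definition Pk (k : nat) : R :=
  \sum_(i < N)
   ( \sum_(l < M) sigma2 k i l * sqnl l (vsub (X k.+1 i) (X k i))
   + rho P i * sqn (vsub (X k.+1 i) (X k i))
   + (tau k + rho P i) * sqn (vsub (Z k.+1) (Z k))
   + \sum_(c <- call) (gamma k i c + rho P i / 2) * sqn (vsub (Y k.+1 i c) (Y k i c))
   + rho P i / 2 * \sum_(l < M)
        ( sqn (vsub (Fval i (gs_le (X k.+1 i) (X k i) l))
                    (Fval i (gs_lt (X k.+1 i) (X k i) l)))
        + sqn (Glin i (rstr l (vsub (X k.+1 i) (X k i))))
        + 2 * sqn (Hlin i (rstr l (vsub (X k.+1 i) (X k i)))) ) ).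

Definition Uk (k : nat) (i : 'I_N) (l : 'I_M) : R :=
  let Xle := gs_le (X k.+1 i) (X k i) l in
  let Xlt := gs_lt (X k.+1 i) (X k i) l in
  dot (fun j => mu k i cF j + rho P i * (Fval i Xle j + Y k i cF j))
      (fun j => Fval i Xlt j - Fval i Xle j
                - dot (qgrad (Fc P i j) Xle) (rstr l (vsub (X k i) (X k.+1 i)))).

End Algo.
Arguments dimc {R}.
Arguments Yfam {R}.
Arguments inbox {R}.
Arguments inboxl {R}.
Arguments inYbox {R}.
Arguments inMubox {R}.
Arguments Fval {R}.
Arguments Glin {R}.
Arguments Hlin {R}.
Arguments Gval {R}.
Arguments Hval {R}.
Arguments resb {R}.
Arguments res {R}.
Arguments Li {R}.
Arguments rstr {R}.
Arguments bupd {R}.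
Arguments gs_lt {R}.
Arguments gs_le {R}.
Arguments norm1l {R}.
Arguments sqnl {R}.
Arguments objX {R}.
Arguments objZ {R}.
Arguments objY {R}.
Arguments rk {R}.
Arguments alph {R}.
Arguments Lk {R}.
Arguments Pk {R}.
Arguments Uk {R}.

(* Main.v *)
Require Import Defs.
From HB Require Import structures.
From mathcomp Require Import all_boot all_order all_algebra.
From mathcomp Require Import ring lra.
From Stdlib Require Import FunctionalExtensionality.
Import Order.TTheory GRing.Theory Num.Theory.
Local Open Scope ring_scope.

Section Gen.
Variable R : realFieldType.

Lemma dot_line m (u a b c : 'I_m -> R) t :
  dot u (fun j => a j + t * b j + t ^+ 2 * c j)
  = dot u a + t * dot u b + t ^+ 2 * dot u c.
Proof.
rewrite /dot !mulr_sumr -!big_split /=; apply: eq_bigr => j _; ring.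
Qed.

Lemma sqn_line m (a b c : 'I_m -> R) t :
  sqn (fun j => a j + t * b j + t ^+ 2 * c j)
  = sqn a + t * (2 * dot a b) + t ^+ 2 * (sqn b + 2 * dot a c)
    + t ^+ 3 * (2 * dot b c) + t ^+ 4 * sqn c.
Proof.
rewrite /dot /sqn.
transitivity (\sum_(j < m) (a j ^+ 2 + t * (2 * (a j * b j)) + t ^+ 2 * (b j ^+ 2 + 2 * (a j * c j))
   + t ^+ 3 * (2 * (b j * c j)) + t ^+ 4 * c j ^+ 2)).
  by apply: eq_bigr => j _; ring.
rewrite !big_split /= -!mulr_sumr !big_split /= -!mulr_sumr //.
Qed.

Lemma key (a b c e : R) :
  (forall t, 0 < t -> t <= 1 -> 0 <= t * a + t ^+ 2 * (b + t * c + t ^+ 2 * e)) ->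
  0 <= a.
Proof.
move=> H; rewrite leNgt; apply/negP => ha.
set B := `|b| + `|c| + `|e| + 1.
have hB : 0 < B by rewrite /B; have := normr_ge0 b; have := normr_ge0 c;
  have := normr_ge0 e; lra.
have hden : 0 < 2 * B - a by lra.
set t := - a / (2 * B - a).
have ht0 : 0 < t by rewrite /t divr_gt0 // oppr_gt0.
have htd : t * (2 * B - a) = - a by rewrite /t divfK // gt_eqF.
have ht1 : t <= 1 by nra.
have hX : b + t * c + t ^+ 2 * e <= B.
  have h1 : b <= `|b| := ler_norm b.
  have h2 : t * c <= `|c|.
    apply: (le_trans (ler_norm _)); rewrite normrM gtr0_norm //.
    have := normr_ge0 c; nra.
  have h3 : t ^+ 2 * e <= `|e|.
    apply: (le_trans (ler_norm _)); rewrite normrM normrX gtr0_norm //.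
    have ht21 : t ^+ 2 <= 1 by rewrite expr2; nra.
    by apply: ler_piMl => //; apply: normr_ge0.
  rewrite /B; lra.
have := H t ht0 ht1.
set X := b + t * c + t ^+ 2 * e in hX *.
have ht2 : 0 < t ^+ 2 by rewrite exprn_gt0.
have h4 : t ^+ 2 * X <= t ^+ 2 * B by rewrite ler_pM2l.
have e1 : t * B = (- a + t * a) / 2 by lra.
have e2 : t ^+ 2 * B = t * ((- a + t * a) / 2) by rewrite -e1 expr2 mulrA.
have h5 : t * a < 0 by rewrite pmulr_rlt0.
have h6 : t * (t * a) < 0 by rewrite pmulr_rlt0.
move: h4; rewrite e2 => h4 h7; nra.
Qed.

Lemma conv_box (lo hi a b t : R) :
  lo <= a <= hi -> lo <= b <= hi -> 0 <= t <= 1 -> lo <= a + t * (b - a) <= hi.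
Proof. move=> /andP[h1 h2] /andP[h3 h4] /andP[h5 h6]; apply/andP; split; nra. Qed.

End Gen.
Section Prob.
Variable R : realFieldType.
Variable P : problem R.
Variable i : 'I_(pN P).
Local Notation n := (pn P).
Local Notation vec := ('I_(pn P) -> R).

Lemma dot_lin m (u a b : 'I_m -> R) t :
  dot u (fun j => a j + t * b j) = dot u a + t * dot u b.
Proof. rewrite /dot mulr_sumr -big_split /=; apply: eq_bigr => j _; ring. Qed.

Lemma aff_line (a : affine R n) (x d : vec) t :
  aff_eval a (fun j => x j + t * d j) = aff_eval a x + t * dot (aff_w a) d.
Proof. rewrite /aff_eval dot_lin; ring. Qed.

Definition qh (q : qcomp R n) (d : vec) : R :=
  match q with
  | QSum a c => dot (aff_w c) d ^+ 2
  | QDiff c a b => dot (aff_w c) d ^+ 2 - dot (aff_w a) d * dot (aff_w b) d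
  end.

Lemma qeval_line q (x d : vec) t :
  qeval q (fun j => x j + t * d j) = qeval q x + t * dot (qgrad q x) d + t ^+ 2 * qh q d.
Proof.
case: q => [a c | c a b] /=; rewrite !aff_line.
- have -> : dot (qgrad (QSum a c) x) d = dot (aff_w a) d + 2 * aff_eval c x * dot (aff_w c) d.
    by rewrite /dot mulr_sumr -big_split /=; apply: eq_bigr => j _; ring.
  ring.
- have -> : dot (qgrad (QDiff c a b) x) d = 2 * aff_eval c x * dot (aff_w c) d
     - (dot (aff_w a) d * aff_eval b x + aff_eval a x * dot (aff_w b) d).
    rewrite /dot !mulr_sumr !mulr_suml -big_split -sumrN -big_split /=; apply: eq_bigr => j _; ring.
  ring.
Qed.

Lemma qeval_line1 q (x d : vec) :
  qeval q (fun j => x j + d j) = qeval q x + dot (qgrad q x) d + qh q d.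
Proof.
have -> : (fun j => x j + d j) = (fun j => x j + 1 * d j).
  by apply: functional_extensionality => j; rewrite mul1r.
by rewrite qeval_line !(mul1r, expr1n).
Qed.

Lemma Glin_line (x d : vec) t j :
  Glin P i (fun j => x j + t * d j) j = Glin P i x j + t * Glin P i d j.
Proof. rewrite /Glin mulr_sumr -big_split /=; apply: eq_bigr => k _; ring. Qed.
Lemma Hlin_line (x d : vec) t j :
  Hlin P i (fun j => x j + t * d j) j = Hlin P i x j + t * Hlin P i d j.
Proof. rewrite /Hlin mulr_sumr -big_split /=; apply: eq_bigr => k _; ring. Qed.

Definition ecoef (c : ctype) (x d : vec) : 'I_(dimc P i c) -> R :=
  match c as c0 return 'I_(dimc P i c0) -> R with
  | cpX => fun j => d j
  | cnX => fun j => - d j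
  | cF => fun j => dot (qgrad (Fc P i j) x) d
  | cG => Glin P i d
  | cpH => Hlin P i d
  | cnH => fun j => - Hlin P i d j
  end.
Definition hcoef (c : ctype) (d : vec) : 'I_(dimc P i c) -> R :=
  match c as c0 return 'I_(dimc P i c0) -> R with
  | cF => fun j => qh (Fc P i j) d
  | _ => fun _ => 0
  end.

Lemma res_line c (x Z d : vec) (y : 'I_(dimc P i c) -> R) t j :
  res P i c (fun j => x j + t * d j) Z y j
  = res P i c x Z y j + t * ecoef c x d j + t ^+ 2 * hcoef c d j.
Proof.
move: y j; case: c => y j; rewrite /res /=.
- ring.
- ring.
- rewrite /Fval qeval_line; ring.
- rewrite /Gval Glin_line; ring.
- rewrite /Hval Hlin_line; ring.
- rewrite /Hval Hlin_line; ring.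
Qed.

Definition LA (x Z d : vec) (Y mu : Yfam P i) : R :=
  dot (f0 P) d + \sum_(c <- call) dot (mu c) (ecoef c x d)
  + rho P i * \sum_(c <- call) dot (res P i c x Z (Y c)) (ecoef c x d).
Definition LB (x Z d : vec) (Y mu : Yfam P i) : R :=
  \sum_(c <- call) dot (mu c) (hcoef c d)
  + rho P i / 2 * (\sum_(c <- call) sqn (ecoef c x d)
                   + 2 * \sum_(c <- call) dot (res P i c x Z (Y c)) (hcoef c d)).
Definition LC (x d : vec) : R := rho P i * \sum_(c <- call) dot (ecoef c x d) (hcoef c d).
Definition LE (d : vec) : R := rho P i / 2 * \sum_(c <- call) sqn (hcoef c d).

Lemma Li_line (x Z d : vec) (Y mu : Yfam P i) t :
  Li P i (fun j => x j + t * d j) Z Y mu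
  = Li P i x Z Y mu + t * LA x Z d Y mu
    + t ^+ 2 * (LB x Z d Y mu + t * LC x d + t ^+ 2 * LE d).
Proof.
rewrite /LA /LB /LC /LE.
set r0 := fun c => res P i c x Z (Y c).
rewrite /Li dot_lin.
have Hr c : res P i c (fun j => x j + t * d j) Z (Y c)
   = fun j => r0 c j + t * ecoef c x d j + t ^+ 2 * hcoef c d j.
  by apply: functional_extensionality => j; rewrite res_line.
under eq_bigr => c _ do rewrite Hr dot_line.
under [X in _ + _ * X]eq_bigr => c _ do rewrite Hr sqn_line.
rewrite !big_split /= -!mulr_sumr big_split /= -mulr_sumr /r0 /=.
by field.
Qed.

Lemma Li_line1 (x Z d : vec) (Y mu : Yfam P i) :
  Li P i (fun j => x j + d j) Z Y mu
  = Li P i x Z Y mu + LA x Z d Y mu + LB x Z d Y mu + LC x d + LE d.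
Proof.
have -> : (fun j => x j + d j) = (fun j => x j + 1 * d j).
  by apply: functional_extensionality => j; rewrite mul1r.
rewrite Li_line !(mul1r, expr1n); ring.
Qed.


Lemma dot_h0 c (d : vec) (u : 'I_(dimc P i c) -> R) : c <> cF -> dot u (hcoef c d) = 0.
Proof.
move: u; case: c => u hc; try (by exfalso; exact: hc).
all: by rewrite /dot big1 // => j _; rewrite /= mulr0.
Qed.
Lemma dot_h0' c (d : vec) (u : 'I_(dimc P i c) -> R) : c <> cF -> dot (hcoef c d) u = 0.
Proof.
move: u; case: c => u hc; try (by exfalso; exact: hc).
all: by rewrite /dot big1 // => j _; rewrite /= mul0r.
Qed.
Lemma sqn_h0 c (d : vec) : c <> cF -> sqn (hcoef c d) = 0.
Proof.
case: c => hc; try (by exfalso; exact: hc).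
all: by rewrite /sqn big1 // => j _; rewrite /= expr0n.
Qed.

Lemma xstep (Z0 : vec) (Y0 mu0 : Yfam P i) (X1 X0 : vec) (l : 'I_(pM P)) (s1 s2 : R) :
  inboxl P l X1 -> inboxl P l X0 ->
  (forall W, inboxl P l W ->
     Li P i (bupd P (gs_lt P X1 X0 l) l X1) Z0 Y0 mu0
       + s1 * norm1l P l (vsub (bupd P (gs_lt P X1 X0 l) l X1) X0)
       + s2 / 2 * sqnl P l (vsub (bupd P (gs_lt P X1 X0 l) l X1) X0)
     <= Li P i (bupd P (gs_lt P X1 X0 l) l W) Z0 Y0 mu0
       + s1 * norm1l P l (vsub (bupd P (gs_lt P X1 X0 l) l W) X0)
       + s2 / 2 * sqnl P l (vsub (bupd P (gs_lt P X1 X0 l) l W) X0)) ->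
  s1 * norm1l P l (vsub X0 X1)
    + dot (fun j => mu0 cF j + rho P i * (Fval P i (gs_le P X1 X0 l) j + Y0 cF j))
          (fun j => Fval P i (gs_lt P X1 X0 l) j - Fval P i (gs_le P X1 X0 l) j
                - dot (qgrad (Fc P i j) (gs_le P X1 X0 l)) (rstr P l (vsub X0 X1)))
    + s2 * sqnl P l (vsub X1 X0)
    + rho P i * sqn (rstr P l (vsub X1 X0))
    + rho P i / 2 * ( sqn (vsub (Fval P i (gs_le P X1 X0 l)) (Fval P i (gs_lt P X1 X0 l)))
        + sqn (Glin P i (rstr P l (vsub X1 X0)))
        + 2 * sqn (Hlin P i (rstr P l (vsub X1 X0))))
  <= Li P i (gs_lt P X1 X0 l) Z0 Y0 mu0 - Li P i (gs_le P X1 X0 l) Z0 Y0 mu0.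
Proof.
move=> hX1 hX0 Hopt.
set xle := gs_le P X1 X0 l; set xlt := gs_lt P X1 X0 l.
set d := rstr P l (vsub X0 X1).
have f1 : bupd P (gs_lt P X1 X0 l) l X1 = xle.
  apply: functional_extensionality => j; rewrite /bupd /xle /gs_lt /gs_le.
  case: eqP => [->|/eqP hne]; first by rewrite leqnn.
  by case: ltngtP => // h; case/eqP: hne; apply: ord_inj.
have f2 : xlt = fun j => xle j + d j.
  apply: functional_extensionality => j; rewrite /d /xle /xlt /gs_lt /gs_le /rstr /vsub.
  case: eqP => [->|/eqP hne]; first by rewrite ltnn leqnn; ring.
  by case: ltngtP => // h; [ring|ring|case/eqP: hne; apply: ord_inj].
have f3 t : bupd P (gs_lt P X1 X0 l) l (fun j => X1 j + t * (X0 j - X1 j))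
          = fun j => xle j + t * d j.
  rewrite -f1; apply: functional_extensionality => j; rewrite /d /bupd /rstr /vsub.
  by case: eqP => _; ring.
have f4 t : 0 <= t <= 1 -> inboxl P l (fun j => X1 j + t * (X0 j - X1 j)).
  by move=> ht j hj; apply: conv_box => //; [exact: hX1|exact: hX0].
have f5 t : 0 <= t <= 1 ->
    norm1l P l (vsub (fun j => xle j + t * d j) X0) = (1 - t) * norm1l P l (vsub X0 X1).
  move=> /andP[ht0 ht1]; rewrite /norm1l mulr_sumr; apply: eq_bigr => j /eqP hj.
  rewrite /vsub /d /rstr /xle /gs_le hj eqxx leqnn /vsub.
  rewrite (_ : X1 j + t * (X0 j - X1 j) - X0 j = (1 - t) * (X0 j - X1 j) * -1); last by ring.
  by rewrite normrM normrN1 mulr1 normrM ger0_norm // subr_ge0.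
have f5' : norm1l P l (vsub xle X0) = norm1l P l (vsub X0 X1).
  apply: eq_bigr => j /eqP hj; rewrite /vsub /xle /gs_le hj leqnn; apply: distrC.
have f6 t : sqnl P l (vsub (fun j => xle j + t * d j) X0) = (1 - t) ^+ 2 * sqnl P l (vsub X1 X0).
  rewrite /sqnl mulr_sumr; apply: eq_bigr => j /eqP hj.
  rewrite /vsub /d /rstr /xle /gs_le hj eqxx leqnn /vsub; ring.
have f6' : sqnl P l (vsub xle X0) = sqnl P l (vsub X1 X0).
  apply: eq_bigr => j /eqP hj; rewrite /vsub /xle /gs_le hj leqnn //.
set N1 := norm1l P l (vsub X0 X1).
set N2 := sqnl P l (vsub X1 X0).
have hA : 0 <= LA xle Z0 d Y0 mu0 - s1 * N1 - s2 * N2.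
  apply: (@key R _ (LB xle Z0 d Y0 mu0 + s2 / 2 * N2) (LC xle d) (LE d)).
  move=> t ht0 ht1.
  have ht : 0 <= t <= 1 by rewrite ht1 ltW.
  have := Hopt _ (f4 t ht); rewrite f1 f3 f5 // f5' f6 f6' Li_line => h.
  rewrite -/N1 -/N2 in h; lra.
set r' := rstr P l (vsub X1 X0).
have hdr j : d j = - r' j by rewrite /d /r' /rstr /vsub; case: ifP => _; ring.
have E1 : sqn (ecoef cpX xle d) = sqn r'.
  by apply: eq_bigr => j _; rewrite /= hdr sqrrN.
have E1' : sqn (ecoef cnX xle d) = sqn r'.
  by apply: eq_bigr => j _; rewrite /= hdr opprK.
have hG j : Glin P i d j = - Glin P i r' j.
  by rewrite /Glin -sumrN; apply: eq_bigr => k _; rewrite hdr mulrN.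
have hH j : Hlin P i d j = - Hlin P i r' j.
  by rewrite /Hlin -sumrN; apply: eq_bigr => k _; rewrite hdr mulrN.
have E2 : sqn (ecoef cG xle d) = sqn (Glin P i r').
  by apply: eq_bigr => j _; rewrite /= hG sqrrN.
have E3 : sqn (ecoef cpH xle d) = sqn (Hlin P i r').
  by apply: eq_bigr => j _; rewrite /= hH sqrrN.
have E3' : sqn (ecoef cnH xle d) = sqn (Hlin P i r').
  by apply: eq_bigr => j _; rewrite /= hH opprK.
have E4 : dot (fun j : 'I_(dimc P i cF) => mu0 cF j + rho P i * (Fval P i xle j + Y0 cF j))
   (fun j : 'I_(dimc P i cF) => Fval P i xlt j - Fval P i xle j - dot (qgrad (Fc P i j) xle) d)
   = dot (mu0 cF) (hcoef cF d) + rho P i * dot (res P i cF xle Z0 (Y0 cF)) (hcoef cF d).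
  rewrite /dot mulr_sumr -big_split; apply: eq_bigr => j _ /=.
  rewrite /res /= /Fval f2 qeval_line1 -/(dot (qgrad (Fc P i j) xle) d); ring.
have E5 : sqn (vsub (Fval P i xle) (Fval P i xlt))
   = sqn (ecoef cF xle d) + 2 * dot (ecoef cF xle d) (hcoef cF d) + sqn (hcoef cF d).
  rewrite /sqn /dot mulr_sumr -!big_split; apply: eq_bigr => j _ /=.
  rewrite /vsub /Fval f2 qeval_line1; ring.
rewrite E4 E5 f2 Li_line1 /LB /LC /LE /call !big_cons !big_nil.
rewrite (dot_h0 cpX) // (dot_h0 cnX) // (dot_h0 cG) // (dot_h0 cpH) //.
rewrite (dot_h0 cnH) // (dot_h0 cpX) // (dot_h0 cnX) // (dot_h0 cG) //.
rewrite (dot_h0 cpH) // (dot_h0 cnH) // (dot_h0 cpX) // (dot_h0 cnX) //.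
rewrite (dot_h0 cG) // (dot_h0 cpH) // (dot_h0 cnH) //.
rewrite (sqn_h0 cpX) // ?(sqn_h0 cnX) // ?(sqn_h0 cG) // ?(sqn_h0 cpH) // ?(sqn_h0 cnH) //.
rewrite E1 E1' E2 E3 E3'.
lra.
Qed.


Lemma sqn_lin m (a b : 'I_m -> R) t :
  sqn (fun j => a j + t * b j) = sqn a + t * (2 * dot a b) + t ^+ 2 * sqn b.
Proof.
rewrite /dot /sqn.
transitivity (\sum_(j < m) (a j ^+ 2 + t * (2 * (a j * b j)) + t ^+ 2 * b j ^+ 2)).
  by apply: eq_bigr => j _; ring.
by rewrite !big_split /= -!mulr_sumr.
Qed.

Lemma ystep c (X1 Z1 : vec) (y1 y0 mu : 'I_(dimc P i c) -> R) (g : R) :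
  inYbox P i c y1 -> inYbox P i c y0 ->
  (forall y, inYbox P i c y ->
     dot mu (res P i c X1 Z1 y1) + rho P i / 2 * sqn (res P i c X1 Z1 y1)
       + g / 2 * sqn (vsub y1 y0)
     <= dot mu (res P i c X1 Z1 y) + rho P i / 2 * sqn (res P i c X1 Z1 y)
       + g / 2 * sqn (vsub y y0)) ->
  (g + rho P i / 2) * sqn (vsub y1 y0)
  <= (dot mu (res P i c X1 Z1 y0) + rho P i / 2 * sqn (res P i c X1 Z1 y0))
     - (dot mu (res P i c X1 Z1 y1) + rho P i / 2 * sqn (res P i c X1 Z1 y1)).
Proof.
move=> h1 h0 Hopt.
set D := vsub y0 y1.
set S := sqn (vsub y1 y0).
set r1 := res P i c X1 Z1 y1.
have hS : sqn D = S by rewrite /S /D; apply: eq_bigr => j _; rewrite /vsub; ring.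
have hr t : res P i c X1 Z1 (fun j => y1 j + t * D j) = fun j => r1 j + t * D j.
  by apply: functional_extensionality => j; rewrite /r1 /res; ring.
have hv t : sqn (vsub (fun j => y1 j + t * D j) y0) = (1 - t) ^+ 2 * S.
  by rewrite /S /sqn mulr_sumr; apply: eq_bigr => j _; rewrite /vsub /D /vsub; ring.
have hv1 : sqn (vsub y1 y0) = S by [].
set a0 := dot mu D + rho P i * dot r1 D.
have hl t : dot mu (res P i c X1 Z1 (fun j => y1 j + t * D j))
        + rho P i / 2 * sqn (res P i c X1 Z1 (fun j => y1 j + t * D j))
     = dot mu r1 + rho P i / 2 * sqn r1 + t * a0 + t ^+ 2 * (rho P i / 2 * S).
  by rewrite hr dot_lin sqn_lin hS /a0; field.
have ha : 0 <= a0 - g * S.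
  apply: (@key R _ (rho P i / 2 * S + g / 2 * S) 0 0) => t ht0 ht1.
  have ht : 0 <= t <= 1 by rewrite ht1 ltW.
  have hb : inYbox P i c (fun j => y1 j + t * D j).
    move=> j; apply: conv_box; [exact: h1|exact: h0|exact: ht].
  have := Hopt _ hb; rewrite hl hv -/r1 => h; rewrite -/S in h; lra.
have e1 : y0 = fun j => y1 j + 1 * D j.
  by apply: functional_extensionality => j; rewrite /D /vsub; ring.
have := hl 1; rewrite -e1 -/r1 => ->; rewrite -/S; lra.
Qed.

Definition gZ (x W : vec) (Y mu : Yfam P i) : R :=
  dot (mu cpX) (res P i cpX x W (Y cpX)) + dot (mu cnX) (res P i cnX x W (Y cnX))
  + rho P i / 2 * (sqn (res P i cpX x W (Y cpX)) + sqn (res P i cnX x W (Y cnX))).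

Lemma Li_Zdiff (x Z0 Z1 : vec) (Y mu : Yfam P i) :
  Li P i x Z0 Y mu - Li P i x Z1 Y mu = gZ x Z0 Y mu - gZ x Z1 Y mu.
Proof.
rewrite /Li /gZ /call !big_cons !big_nil.
have -> : res P i cF x Z1 (Y cF) = res P i cF x Z0 (Y cF) by [].
have -> : res P i cG x Z1 (Y cG) = res P i cG x Z0 (Y cG) by [].
have -> : res P i cpH x Z1 (Y cpH) = res P i cpH x Z0 (Y cpH) by [].
have -> : res P i cnH x Z1 (Y cnH) = res P i cnH x Z0 (Y cnH) by [].
ring.
Qed.

Definition za (x Z1 Z0 : vec) (Y mu : Yfam P i) : R :=
  dot (mu cpX) (fun j => - (Z0 j - Z1 j)) + dot (mu cnX) (fun j => Z0 j - Z1 j)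
  + rho P i * (dot (res P i cpX x Z1 (Y cpX)) (fun j => - (Z0 j - Z1 j))
               + dot (res P i cnX x Z1 (Y cnX)) (fun j => Z0 j - Z1 j)).

Lemma gZ_line (x Z1 Z0 : vec) (Y mu : Yfam P i) t :
  gZ x (fun j => Z1 j + t * (Z0 j - Z1 j)) Y mu
  = gZ x Z1 Y mu + t * za x Z1 Z0 Y mu + t ^+ 2 * (rho P i * sqn (vsub Z1 Z0)).
Proof.
rewrite /gZ /za.
have -> : res P i cpX x (fun j => Z1 j + t * (Z0 j - Z1 j)) (Y cpX)
   = fun j => res P i cpX x Z1 (Y cpX) j + t * (- (Z0 j - Z1 j)).
  by apply: functional_extensionality => j; rewrite /res /=; ring.
have -> : res P i cnX x (fun j => Z1 j + t * (Z0 j - Z1 j)) (Y cnX)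
   = fun j => res P i cnX x Z1 (Y cnX) j + t * (Z0 j - Z1 j).
  by apply: functional_extensionality => j; rewrite /res /=; ring.
rewrite !dot_lin !sqn_lin.
have -> : sqn (fun j : 'I_(dimc P i cpX) => - (Z0 j - Z1 j)) = sqn (vsub Z1 Z0).
  by apply: eq_bigr => j _; rewrite /vsub; ring.
have -> : sqn (fun j : 'I_(dimc P i cnX) => Z0 j - Z1 j) = sqn (vsub Z1 Z0).
  by apply: eq_bigr => j _; rewrite /vsub; ring.
by field.
Qed.

Lemma gZ_1 (x Z1 Z0 : vec) (Y mu : Yfam P i) :
  gZ x Z0 Y mu = gZ x Z1 Y mu + za x Z1 Z0 Y mu + rho P i * sqn (vsub Z1 Z0).
Proof.
have e : Z0 = fun j => Z1 j + 1 * (Z0 j - Z1 j).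
  by apply: functional_extensionality => j; ring.
rewrite {1}e gZ_line; ring.
Qed.

Lemma Li_mudiff (x Z : vec) (Y mu0 mu1 : Yfam P i) :
  Li P i x Z Y mu0 - Li P i x Z Y mu1
  = \sum_(c <- call) dot (fun j => mu0 c j - mu1 c j) (res P i c x Z (Y c)).
Proof.
rewrite /Li.
have -> : \sum_(c <- call) dot (fun j => mu0 c j - mu1 c j) (res P i c x Z (Y c))
   = \sum_(c <- call) dot (mu0 c) (res P i c x Z (Y c))
     - \sum_(c <- call) dot (mu1 c) (res P i c x Z (Y c)).
  rewrite -sumrB; apply: eq_bigr => c _.
  by rewrite /dot -sumrB; apply: eq_bigr => j _; ring.
ring.
Qed.


Lemma Li_Ydiff (x Z : vec) (Y0 Y1 mu : Yfam P i) :
  Li P i x Z Y0 mu - Li P i x Z Y1 mu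
  = \sum_(c <- call) ((dot (mu c) (res P i c x Z (Y0 c)) + rho P i / 2 * sqn (res P i c x Z (Y0 c)))
       - (dot (mu c) (res P i c x Z (Y1 c)) + rho P i / 2 * sqn (res P i c x Z (Y1 c)))).
Proof. rewrite /Li sumrB !big_split /= -!mulr_sumr; ring. Qed.

Lemma Xtele (Z0 : vec) (Y0 mu0 : Yfam P i) (X1 X0 : vec) :
  \sum_(l < pM P) (Li P i (gs_lt P X1 X0 l) Z0 Y0 mu0 - Li P i (gs_le P X1 X0 l) Z0 Y0 mu0)
  = Li P i X0 Z0 Y0 mu0 - Li P i X1 Z0 Y0 mu0.
Proof.
set f := fun m : nat => - Li P i (fun j => if (blk P j < m)%N then X1 j else X0 j) Z0 Y0 mu0.
transitivity (\sum_(l < pM P) (f l.+1 - f l)).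
  apply: eq_bigr => l _; rewrite /f.
  have -> : gs_le P X1 X0 l = fun j => if (blk P j < l.+1)%N then X1 j else X0 j.
    by apply: functional_extensionality => j; rewrite /gs_le ltnS.
  rewrite /gs_lt; ring.
rewrite -(big_mkord xpredT (fun k => f k.+1 - f k)) telescope_sumr // /f.
have -> : (fun j => if (blk P j < 0)%N then X1 j else X0 j) = X0.
  by apply: functional_extensionality => j; rewrite ltn0.
have -> : (fun j => if (blk P j < pM P)%N then X1 j else X0 j) = X1.
  by apply: functional_extensionality => j; rewrite ltn_ord.
ring.
Qed.

End Prob.
Arguments gZ {R}.
Arguments za {R}.
Arguments gZ_line {R}.
Arguments gZ_1 {R}.
Arguments Li_Ydiff {R}.
Arguments Xtele {R}.
Arguments xstep {R}.
Arguments ystep {R}.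
Arguments Li_mudiff {R}.
Arguments Li_Zdiff {R}.

Lemma sqn_partition (R : realFieldType) (P : problem R) (v : 'I_(pn P) -> R) :
  \sum_(l < pM P) sqn (rstr P l v) = sqn v.
Proof.
rewrite /sqn exchange_big /=; apply: eq_bigr => j _.
rewrite (bigD1 (blk P j)) //= big1 ?addr0; first by rewrite /rstr eqxx.
by move=> l /negbTE hl; rewrite /rstr eq_sym hl expr0n.
Qed.

Lemma zstep (R : realFieldType) (P : problem R) (X1 : 'I_(pN P) -> 'I_(pn P) -> R)
  (Z1 Z0 : 'I_(pn P) -> R) (Y mu : forall i, Yfam P i) (tau : R) :
  inbox P Z1 -> inbox P Z0 ->
  (forall W, inbox P W ->
    \sum_(i < pN P) (gZ P i (X1 i) Z1 (Y i) (mu i) + tau / 2 * sqn (vsub Z1 Z0))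
    <= \sum_(i < pN P) (gZ P i (X1 i) W (Y i) (mu i) + tau / 2 * sqn (vsub W Z0))) ->
  \sum_(i < pN P) (tau + rho P i) * sqn (vsub Z1 Z0)
  <= \sum_(i < pN P) (Li P i (X1 i) Z0 (Y i) (mu i) - Li P i (X1 i) Z1 (Y i) (mu i)).
Proof.
move=> h1 h0 Hopt.
set S := sqn (vsub Z1 Z0).
have ha : 0 <= \sum_(i < pN P) (za P i (X1 i) Z1 Z0 (Y i) (mu i) - tau * S).
  apply: (@key R _ (\sum_(i < pN P) ((rho P i + tau / 2) * S)) 0 0) => t ht0 ht1.
  have ht : 0 <= t <= 1 by rewrite ht1 ltW.
  have hb : inbox P (fun j => Z1 j + t * (Z0 j - Z1 j)).
    move=> j; apply: conv_box; [exact: h1|exact: h0|exact: ht].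
  have := Hopt _ hb; rewrite -subr_ge0 -sumrB.
  have hv : sqn (vsub (fun j => Z1 j + t * (Z0 j - Z1 j)) Z0) = (1 - t) ^+ 2 * S.
    by rewrite /S /sqn mulr_sumr; apply: eq_bigr => j _; rewrite /vsub; ring.
  under eq_bigr => i _ do rewrite gZ_line hv.
  move=> h; apply: (le_trans h) => {h}; rewrite le_eqVlt; apply/orP; left; apply/eqP.
  rewrite -/S; clearbody S.
  rewrite !mulr0 !addr0 !mulr_sumr -big_split; apply: eq_bigr => i _ /=.
  by field.
under [X in _ <= X]eq_bigr => i _ do rewrite Li_Zdiff (gZ_1 P i (X1 i) Z1 Z0).
rewrite -subr_ge0 -sumrB.
rewrite (eq_bigr (fun i => za P i (X1 i) Z1 Z0 (Y i) (mu i) - tau * S)) // => i _.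
rewrite -/S; ring.
Qed.


Theorem lemma2 (R : realFieldType) (P : problem R)
  (X : nat -> 'I_(pN P) -> 'I_(pn P) -> R) (Z : nat -> 'I_(pn P) -> R)
  (Y : nat -> forall i : 'I_(pN P), Yfam P i)
  (mu : nat -> forall i : 'I_(pN P), Yfam P i)
  (sigma1 sigma2 : nat -> 'I_(pN P) -> 'I_(pM P) -> R) (tau : nat -> R)
  (gamma : nat -> 'I_(pN P) -> ctype -> R)
  (* standing assumptions on the data *)
  (Hu : forall j, 0 < ub P j)
  (Hrho : forall i, 0 < rho P i)
  (HuY : forall i c j, 0 < uY P i c j)
  (Humu : forall i c j, 0 < umu P i c j)
  (Halpha : forall i c, 0 < alpha P i c)
  (HFconv : forall i j (x y : 'I_(pn P) -> R) (t : R),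
      inbox P x -> inbox P y -> 0 <= t <= 1 ->
      qeval (Fc P i j) (fun d => t * x d + (1 - t) * y d)
        <= t * qeval (Fc P i j) x + (1 - t) * qeval (Fc P i j) y)
  (* parameters *)
  (Hs1 : forall k i l, 0 <= sigma1 k i l)
  (Hs2 : forall k i l, 0 < sigma2 k i l)
  (Htau : forall k, 0 < tau k)
  (Hgamma : forall k i c, 0 < gamma k i c)
  (* initial values *)
  (HX0 : forall i, inbox P (X 0%N i))
  (HZ0 : inbox P (Z 0%N))
  (HY0 : forall i c, inYbox P i c (Y 0%N i c))
  (Hmu0 : forall i c, inMubox P i c (mu 0%N i c))
  (* (U1) *)
  (HU1 : forall k i l,
      inboxl P l (X k.+1 i) /\
      forall W : 'I_(pn P) -> R, inboxl P l W ->
        objX P X Z Y mu sigma1 sigma2 k i l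
             (bupd P (gs_lt P (X k.+1 i) (X k i) l) l (X k.+1 i))
        <= objX P X Z Y mu sigma1 sigma2 k i l
             (bupd P (gs_lt P (X k.+1 i) (X k i) l) l W))
  (* (U2) *)
  (HU2 : forall k, inbox P (Z k.+1) /\
      forall W : 'I_(pn P) -> R, inbox P W ->
        objZ P X Z Y mu tau k (Z k.+1) <= objZ P X Z Y mu tau k W)
  (* (U3) *)
  (HU3 : forall k i c, inYbox P i c (Y k.+1 i c) /\
      forall y : 'I_(dimc P i c) -> R, inYbox P i c y ->
        objY P X Z Y mu gamma k i c (Y k.+1 i c) <= objY P X Z Y mu gamma k i c y)
  (* (D) *)
  (HD : forall k i c j,
      mu k.+1 i c j = mu k i c j - alph P X Z Y mu k.+1 i c j * rk P X Z Y k.+1 i c j)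
  (K : nat) :
  Lk P X Z Y mu 0%N >=
    Lk P X Z Y mu K
    + \sum_(i < pN P) \sum_(1 <= k < K.+1) \sum_(c <- call) \sum_(j < dimc P i c)
         alph P X Z Y mu k i c j * `|rk P X Z Y k i c j| ^+ 2
    + \sum_(k < K) Pk P X Z Y sigma2 tau gamma k
    + \sum_(i < pN P) \sum_(k < K) \sum_(l < pM P)
         (sigma1 k i l * norm1l P l (vsub (X k i) (X k.+1 i)) + Uk P X Y mu k i l).
Proof.
have hXk k i l : inboxl P l (X k i).
  case: k => [|k]; [by move=> j _; apply: HX0 | exact: (HU1 k i l).1].
have hZk k : inbox P (Z k) by case: k => [|k]; [exact: HZ0 | exact: (HU2 k).1].
have hYk k i c : inYbox P i c (Y k i c).
  by case: k => [|k]; [exact: HY0 | exact: (HU3 k i c).1].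
have step k : Lk P X Z Y mu k.+1
  + \sum_(i < pN P) \sum_(c <- call) \sum_(j < dimc P i c)
       alph P X Z Y mu k.+1 i c j * `|rk P X Z Y k.+1 i c j| ^+ 2
  + Pk P X Z Y sigma2 tau gamma k
  + \sum_(i < pN P) \sum_(l < pM P)
       (sigma1 k i l * norm1l P l (vsub (X k i) (X k.+1 i)) + Uk P X Y mu k i l)
  <= Lk P X Z Y mu k.
  have hX i :
    \sum_(l < pM P) (sigma1 k i l * norm1l P l (vsub (X k i) (X k.+1 i)) + Uk P X Y mu k i l)
    + \sum_(l < pM P) sigma2 k i l * sqnl P l (vsub (X k.+1 i) (X k i))
    + rho P i * sqn (vsub (X k.+1 i) (X k i))
    + rho P i / 2 * \sum_(l < pM P)
        ( sqn (vsub (Fval P i (gs_le P (X k.+1 i) (X k i) l))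
                    (Fval P i (gs_lt P (X k.+1 i) (X k i) l)))
        + sqn (Glin P i (rstr P l (vsub (X k.+1 i) (X k i))))
        + 2 * sqn (Hlin P i (rstr P l (vsub (X k.+1 i) (X k i)))) )
    <= Li P i (X k i) (Z k) (Y k i) (mu k i) - Li P i (X k.+1 i) (Z k) (Y k i) (mu k i).
    rewrite -Xtele.
    apply: le_trans (ler_sum _ (fun l _ => xstep P i (Z k) (Y k i) (mu k i) (X k.+1 i) (X k i) l
       (sigma1 k i l) (sigma2 k i l) (HU1 k i l).1 (hXk k i l) (HU1 k i l).2)).
    rewrite le_eqVlt; apply/orP; left; apply/eqP.
    rewrite -sqn_partition !mulr_sumr -!big_split /=; apply: eq_bigr => l _.
    rewrite /Uk /=; ring.
  have hY i : \sum_(c <- call) (gamma k i c + rho P i / 2) * sqn (vsub (Y k.+1 i c) (Y k i c))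
    <= Li P i (X k.+1 i) (Z k.+1) (Y k i) (mu k i) - Li P i (X k.+1 i) (Z k.+1) (Y k.+1 i) (mu k i).
    rewrite Li_Ydiff; apply: ler_sum => c _; apply: ystep;
      [exact: (HU3 k i c).1 | exact: hYk | exact: (HU3 k i c).2].
  have hM i : \sum_(c <- call) \sum_(j < dimc P i c)
       alph P X Z Y mu k.+1 i c j * `|rk P X Z Y k.+1 i c j| ^+ 2
    = Li P i (X k.+1 i) (Z k.+1) (Y k.+1 i) (mu k i) - Li P i (X k.+1 i) (Z k.+1) (Y k.+1 i) (mu k.+1 i).
    rewrite Li_mudiff; apply: eq_bigr => c _; rewrite /dot; apply: eq_bigr => j _.
    rewrite HD real_normK ?num_real // /rk; ring.
  have hZ := zstep R P (X k.+1) (Z k.+1) (Z k) (Y k) (mu k) (tau k) (hZk k.+1) (hZk k) (HU2 k).2.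
  have sX : \sum_(i < pN P)
      \sum_(l < pM P) (sigma1 k i l * norm1l P l (vsub (X k i) (X k.+1 i)) + Uk P X Y mu k i l)
    + \sum_(i < pN P) \sum_(l < pM P) sigma2 k i l * sqnl P l (vsub (X k.+1 i) (X k i))
    + \sum_(i < pN P) rho P i * sqn (vsub (X k.+1 i) (X k i))
    + \sum_(i < pN P) rho P i / 2 * \sum_(l < pM P)
        ( sqn (vsub (Fval P i (gs_le P (X k.+1 i) (X k i) l))
                    (Fval P i (gs_lt P (X k.+1 i) (X k i) l)))
        + sqn (Glin P i (rstr P l (vsub (X k.+1 i) (X k i))))
        + 2 * sqn (Hlin P i (rstr P l (vsub (X k.+1 i) (X k i)))) )
    <= \sum_(i < pN P) Li P i (X k i) (Z k) (Y k i) (mu k i)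
       - \sum_(i < pN P) Li P i (X k.+1 i) (Z k) (Y k i) (mu k i).
    by rewrite -!big_split -sumrB; apply: ler_sum => i _; exact: hX i.
  have sY := ler_sum (index_enum (ordinal (pN P))) (P:=xpredT) (fun i _ => hY i).
  have sM : \sum_(i < pN P) \sum_(c <- call) \sum_(j < dimc P i c)
       alph P X Z Y mu k.+1 i c j * `|rk P X Z Y k.+1 i c j| ^+ 2
    = \sum_(i < pN P) (Li P i (X k.+1 i) (Z k.+1) (Y k.+1 i) (mu k i)
                     - Li P i (X k.+1 i) (Z k.+1) (Y k.+1 i) (mu k.+1 i)).
    by apply: eq_bigr => i _; exact: hM i.
  have ePk : Pk P X Z Y sigma2 tau gamma k =
      \sum_(i < pN P) \sum_(l < pM P) sigma2 k i l * sqnl P l (vsub (X k.+1 i) (X k i))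
    + \sum_(i < pN P) rho P i * sqn (vsub (X k.+1 i) (X k i))
    + \sum_(i < pN P) (tau k + rho P i) * sqn (vsub (Z k.+1) (Z k))
    + \sum_(i < pN P) \sum_(c <- call) (gamma k i c + rho P i / 2) * sqn (vsub (Y k.+1 i c) (Y k i c))
    + \sum_(i < pN P) rho P i / 2 * \sum_(l < pM P)
        ( sqn (vsub (Fval P i (gs_le P (X k.+1 i) (X k i) l))
                    (Fval P i (gs_lt P (X k.+1 i) (X k i) l)))
        + sqn (Glin P i (rstr P l (vsub (X k.+1 i) (X k i))))
        + 2 * sqn (Hlin P i (rstr P l (vsub (X k.+1 i) (X k i)))) ).
    by rewrite /Pk -!big_split.
  rewrite !sumrB in sY sM hZ.
  rewrite /Lk ePk; lra.
elim: K => [|K IH].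
  under eq_bigr => i _ do rewrite big_geq //.
  rewrite big1_eq big_ord0.
  under eq_bigr => i _ do rewrite big_ord0.
  rewrite big1_eq; lra.
have e1 : \sum_(i < pN P) \sum_(1 <= k < K.+2) \sum_(c <- call) \sum_(j < dimc P i c)
         alph P X Z Y mu k i c j * `|rk P X Z Y k i c j| ^+ 2
  = \sum_(i < pN P) \sum_(1 <= k < K.+1) \sum_(c <- call) \sum_(j < dimc P i c)
         alph P X Z Y mu k i c j * `|rk P X Z Y k i c j| ^+ 2
  + \sum_(i < pN P) \sum_(c <- call) \sum_(j < dimc P i c)
         alph P X Z Y mu K.+1 i c j * `|rk P X Z Y K.+1 i c j| ^+ 2.
  by rewrite -big_split; apply: eq_bigr => i _; rewrite big_nat_recr.
have e2 : \sum_(i < pN P) \sum_(k < K.+1) \sum_(l < pM P)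
         (sigma1 k i l * norm1l P l (vsub (X k i) (X k.+1 i)) + Uk P X Y mu k i l)
  = \sum_(i < pN P) \sum_(k < K) \sum_(l < pM P)
         (sigma1 k i l * norm1l P l (vsub (X k i) (X k.+1 i)) + Uk P X Y mu k i l)
  + \sum_(i < pN P) \sum_(l < pM P)
         (sigma1 K i l * norm1l P l (vsub (X K i) (X K.+1 i)) + Uk P X Y mu K i l).
  by rewrite -big_split; apply: eq_bigr => i _; rewrite big_ord_recr.
rewrite e1 e2 big_ord_recr /=.
have := step K; lra.
Qed.
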